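(* Let $f:[a,b]\to\mathbb{C}$ be continuous and write $f=g+ih$ with $g,h:[a,b]\to\mathbb{R}$ its real and imaginary parts. Then: (1) $\dim_H(G(g+ih))\ge \max\{\dim_H(G(g)),\dim_H(G(h))\}$; (2) if $h$ is Lipschitz, then $\dim_H(G(g+ih))=\dim_H(G(g))$.
   Context: For a function $u$ on $[a,b]$, $G(u)=\{(x,u(x)):x\in[a,b]\}$ denotes its graph; for complex-valued $u$ the graph is regarded as a subset of $\mathbb{R}\times\mathbb{C}\cong\mathbb{R}^3$ with the Euclidean metric, for real-valued $u$ as a subset of $\mathbb{R}^2$. $\dim_H$ denotes Hausdorff dimension. *)

(* Defs.v *)
From HB Require Import structures.
From mathcomp Require Import all_boot all_order all_algebra.
From mathcomp Require Import all_classical all_reals all_analysis.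
From mathcomp.real_closed Require Import complex.

Set Implicit Arguments.
Unset Strict Implicit.
Unset Printing Implicit Defensive.

Import Order.TTheory GRing.Theory Num.Theory.
Local Open Scope classical_set_scope.
Local Open Scope ring_scope.

(* diameter of a set, with the convention diam(empty) = 0 *)
Definition diam {R : realType} {T : Type} (d : T -> T -> R) (A : set T) : \bar R :=
  ereal_sup ([set 0%E] `|` [set (d p.1 p.2)%:E | p in A `*` A]).

Definition delta_cover {R : realType} {T : Type} (d : T -> T -> R)
  (delta : R) (E : set T) (U : nat -> set T) : Prop :=
  E `<=` \bigcup_i U i /\ (forall i, (diam d (U i) <= delta%:E)%E).

Definition hausdorff_content {R : realType} {T : Type} (d : T -> T -> R)
  (s delta : R) (E : set T) : \bar R :=
  ereal_inf [set (\sum_(0 <= i <oo) ((fine (diam d (U i))) `^ s)%:E)%E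
            | U in [set U | delta_cover d delta E U]].

(* H^s(E) = lim_{delta -> 0+} H^s_delta(E) = sup_{delta > 0} H^s_delta(E) *)
Definition hausdorff_measure {R : realType} {T : Type} (d : T -> T -> R)
  (s : R) (E : set T) : \bar R :=
  ereal_sup [set hausdorff_content d s delta E | delta in [set delta : R | 0 < delta]].

Definition hausdorff_dim {R : realType} {T : Type} (d : T -> T -> R)
  (E : set T) : \bar R :=
  ereal_inf [set s%:E | s in [set s : R | 0 <= s /\ hausdorff_measure d s E = 0%E]].

Definition dist_R2 {R : realType} (p q : R * R) : R :=
  Num.sqrt ((p.1 - q.1) ^+ 2 + (p.2 - q.2) ^+ 2).

Definition dist_RC {R : realType} (p q : R * R[i]) : R :=
  Num.sqrt ((p.1 - q.1) ^+ 2 + (Normc.normc (p.2 - q.2)) ^+ 2).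

Definition graph {R : realType} {V : Type} (A : set R) (u : R -> V) : set (R * V) :=
  [set (x, u x) | x in A].

Definition continuous_on_C {R : realType} (A : set R) (f : R -> R[i]) : Prop :=
  forall x, A x -> forall e : R, 0 < e -> exists2 del : R, 0 < del &
    forall y, A y -> `|x - y| < del -> Normc.normc (f x - f y) < e.

Definition is_lipschitz_on {R : realType} (A : set R) (h : R -> R) : Prop :=
  exists L : R, forall x y, A x -> A y -> `|h x - h y| <= L * `|x - y|.

(* Main.v *)
Require Import Defs.
From HB Require Import structures.
From mathcomp Require Import all_boot all_order all_algebra.
From mathcomp Require Import all_classical all_reals all_analysis.
From mathcomp.real_closed Require Import complex.
From mathcomp Require Import lra.
Import Order.TTheory GRing.Theory Num.Theory.
Local Open Scope classical_set_scope.
Local Open Scope ring_scope.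

Section Lip.
Variables (R : realType).

Lemma diam_ge0 {T} (d : T -> T -> R) A : (0 <= diam d A)%E.
Proof. by apply: ereal_sup_ubound; left. Qed.

Lemma diam_fin {T} {d : T -> T -> R} {A r} : (diam d A <= r%:E)%E ->
  diam d A = (fine (diam d A))%:E.
Proof. by have := diam_ge0 d A; case: (diam d A). Qed.

Lemma diam_image {T1 T2} (d1 : T1 -> T1 -> R) (d2 : T2 -> T2 -> R) E phi C U :
  0 <= C -> (forall p q, E p -> E q -> d2 (phi p) (phi q) <= C * d1 p q) ->
  (diam d2 (phi @` (U `&` E)) <= C%:E * diam d1 U)%E.
Proof.
move=> C0 HL; apply: ge_ereal_sup => x [|].
  move=> ->.
  by apply: mule_ge0; [rewrite lee_fin | exact: diam_ge0].
move=> [[p q] [/= [u [Uu Eu] <-] [v [Uv Ev] <-]] <-].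
apply: (@le_trans _ _ ((C * d1 u v)%:E)); first by rewrite lee_fin HL.
rewrite EFinM; apply: lee_wpmul2l; first by rewrite lee_fin.
by apply: ereal_sup_ubound; right; exists (u, v).
Qed.

Lemma content_ge0 {T} (d : T -> T -> R) s del E : (0 <= hausdorff_content d s del E)%E.
Proof.
apply: le_ereal_inf_tmp => y [U _ <-]; apply: nneseries_ge0 => n _ _.
by rewrite lee_fin powR_ge0.
Qed.

Lemma content_image {T1 T2} (d1 : T1 -> T1 -> R) (d2 : T2 -> T2 -> R) E phi C s del U :
  0 < C -> 0 <= s -> (forall p q, E p -> E q -> d2 (phi p) (phi q) <= C * d1 p q) ->
  delta_cover d1 del E U ->
  (hausdorff_content d2 s (C * del) (phi @` E) <=
   (C `^ s)%:E * \sum_(0 <= i <oo) ((fine (diam d1 (U i))) `^ s)%:E)%E.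
Proof.
move=> C0 s0 HL [cov dU].
have C0' : 0 <= C by exact: ltW.
pose V i := phi @` (U i `&` E).
have dV i : (diam d2 (V i) <= C%:E * diam d1 (U i))%E by exact: diam_image.
have dV' i : (diam d2 (V i) <= (C * del)%:E)%E.
  by apply: (le_trans (dV i)); rewrite EFinM; apply: lee_wpmul2l => //; rewrite lee_fin.
apply: ge_ereal_inf; exists (\sum_(0 <= i <oo) ((fine (diam d2 (V i))) `^ s)%:E)%E.
  exists V => //; split => //.
  move=> y [x Ex <-]; have [i _ Ui] := cov x Ex.
  by exists i => //; exists x.
rewrite -nneseriesZl; last by move=> i _; rewrite lee_fin powR_ge0.
apply: lee_nneseries; first by move=> i _ _; rewrite lee_fin powR_ge0.
move=> i _; rewrite -EFinM lee_fin -powRM //; last first.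
  by rewrite -lee_fin -(diam_fin (dU i)) diam_ge0.
apply: ge0_ler_powR => //.
- by rewrite nnegrE -lee_fin -(diam_fin (dV' i)) diam_ge0.
- by rewrite nnegrE mulr_ge0 // -lee_fin -(diam_fin (dU i)) diam_ge0.
by rewrite -lee_fin EFinM -(diam_fin (dV' i)) -(diam_fin (dU i)).
Qed.

Lemma lip_null {T1 T2} (d1 : T1 -> T1 -> R) (d2 : T2 -> T2 -> R) E phi C s :
  0 < C -> 0 <= s -> (forall p q, E p -> E q -> d2 (phi p) (phi q) <= C * d1 p q) ->
  hausdorff_measure d1 s E = 0%E -> hausdorff_measure d2 s (phi @` E) = 0%E.
Proof.
move=> C0 s0 HL H0; apply/eqP; rewrite eq_le; apply/andP; split; last first.
  apply: le_ereal_sup_tmp; exists (hausdorff_content d2 s 1 (phi @` E)).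
    by exists 1%R => //=; rewrite ltr01.
  exact: content_ge0.
apply: ge_ereal_sup => x [del del0 <-].
have -> : del = C * (del / C) by rewrite mulrC divfK // gt_eqF.
have del'0 : 0 < del / C by rewrite divr_gt0.
have cE : hausdorff_content d1 s (del / C) E = 0%E.
  apply/eqP; rewrite eq_le content_ge0 andbT -H0.
  by apply: ereal_sup_ubound; exists (del / C).
have Cs0 : 0 < C `^ s by rewrite powR_gt0.
apply/lee_addgt0Pr => e e0; rewrite add0e.
have : (hausdorff_content d1 s (del / C) E < (e / C `^ s)%:E)%E.
  by rewrite cE lte_fin divr_gt0.
move=> /ereal_inf_lt [y [U cU <-]] yl.
apply: (le_trans (content_image _ _ _ _ _ _ _ _ C0 s0 HL cU)).
have -> : e = C `^ s * (e / C `^ s) by rewrite mulrC divfK // gt_eqF.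
rewrite EFinM; apply: lee_wpmul2l; first by rewrite lee_fin ltW.
exact: ltW.
Qed.

Lemma lip_dim {T1 T2} (d1 : T1 -> T1 -> R) (d2 : T2 -> T2 -> R) E phi C :
  0 < C -> (forall p q, E p -> E q -> d2 (phi p) (phi q) <= C * d1 p q) ->
  (hausdorff_dim d2 (phi @` E) <= hausdorff_dim d1 E)%E.
Proof.
move=> C0 HL; apply: ereal_inf_le_tmp => x [s [s0 Hs] <-].
by exists s => //; split => //; exact: (lip_null _ _ _ _ _ _ C0 s0 HL).
Qed.

End Lip.
Lemma normc_sq (R : realType) (a b : R) : Normc.normc (a +i* b)%C ^+ 2 = a ^+ 2 + b ^+ 2.
Proof. by rewrite /= sqr_sqrtr // addr_ge0 // sqr_ge0. Qed.

Lemma proj_dist (R : realType) (p q : R * R[i]) :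
  dist_R2 (p.1, complex.Re p.2) (q.1, complex.Re q.2) <= 1 * dist_RC p q /\
  dist_R2 (p.1, complex.Im p.2) (q.1, complex.Im q.2) <= 1 * dist_RC p q.
Proof.
case: p q => [x [a b]] [y [c d]]; rewrite /dist_R2 /dist_RC /= !mul1r.
rewrite sqr_sqrtr ?addr_ge0 ?sqr_ge0 //.
split; rewrite ler_sqrt ?addr_ge0 ?sqr_ge0 // lerD2l ?lerDl ?lerDr sqr_ge0 //.
Qed.

Lemma graph_comp (R : realType) {V W : Type} (A : set R) (f : R -> V) (g : V -> W) :
  graph A (fun x => g (f x)) = (fun p => (p.1, g p.2)) @` graph A f.
Proof.
apply/seteqP; split => [p [x Ax <-]|p [q [x Ax <-] <-]]; last by exists x.
by exists (x, f x) => //; exists x.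
Qed.

Lemma graph_lift (R : realType) (A : set R) (f : R -> R[i]) :
  graph A f = (fun p : R * R => (p.1, (p.2 +i* complex.Im (f p.1))%C)) @`
     graph A (fun x => complex.Re (f x)).
Proof.
have E x : f x = (complex.Re (f x) +i* complex.Im (f x))%C by case: (f x).
apply/seteqP; split => [p [x Ax <-]|p [q [x Ax <-] <-]].
  by exists (x, complex.Re (f x)); [exists x | rewrite /= -E].
by exists x => //=; rewrite -E.
Qed.

Lemma lift_dist (R : realType) (A : set R) (f : R -> R[i]) (L : R) :
  (forall x y, A x -> A y -> `|complex.Im (f x) - complex.Im (f y)| <= L * `|x - y|) ->
  forall p q, graph A (fun x => complex.Re (f x)) p -> graph A (fun x => complex.Re (f x)) q ->
  dist_RC (p.1, (p.2 +i* complex.Im (f p.1))%C) (q.1, (q.2 +i* complex.Im (f q.1))%C)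
    <= (1 + `|L|) * dist_R2 p q.
Proof.
move=> HL p q [x Ax <-] [y Ay <-]; rewrite /dist_RC /dist_R2 /=.
set u := complex.Re (f x) - complex.Re (f y).
have h := HL x y Ax Ay.
set w := complex.Im (f x) - complex.Im (f y) in h *.
rewrite sqr_sqrtr ?addr_ge0 ?sqr_ge0 //.
have K0 : 0 <= 1 + `|L| by rewrite addr_ge0.
rewrite -[1 + `|L|]ger0_norm // -sqrtr_sqr -sqrtrM ?sqr_ge0 //.
rewrite ler_sqrt ?mulr_ge0 ?addr_ge0 ?sqr_ge0 //.
have hw : w ^+ 2 <= L ^+ 2 * (x - y) ^+ 2.
  rewrite -real_normK ?num_real // -[L ^+ 2]real_normK ?num_real //.
  rewrite -[(x - y) ^+ 2]real_normK ?num_real // -exprMn.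
  rewrite lerXn2r ?nnegrE ?mulr_ge0 //.
  by apply: (le_trans h); rewrite ler_wpM2r // real_ler_norm ?num_real.
have hL : L ^+ 2 = `|L| ^+ 2 by rewrite real_normK ?num_real.
have La : 0 <= `|L| by [].
have s1 : 0 <= (x - y) ^+ 2 by rewrite sqr_ge0.
have s2 : 0 <= u ^+ 2 by rewrite sqr_ge0.
rewrite hL in hw.
nra.
Qed.

Theorem mainTheorem1 (R : realType) (a b : R) (f : R -> R[i]) :
  a < b ->
  continuous_on_C `[a, b] f ->
  (Order.max (hausdorff_dim dist_R2 (graph `[a, b] (fun x => @complex.Re R (f x))))
             (hausdorff_dim dist_R2 (graph `[a, b] (fun x => @complex.Im R (f x))))
     <= hausdorff_dim dist_RC (graph `[a, b] f))%E
  /\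
  (is_lipschitz_on `[a, b] (fun x => @complex.Im R (f x)) ->
   hausdorff_dim dist_RC (graph `[a, b] f)
     = hausdorff_dim dist_R2 (graph `[a, b] (fun x => @complex.Re R (f x)))).
Proof.
move=> _ _.
have H1 : (hausdorff_dim dist_R2 (graph `[a, b] (fun x => @complex.Re R (f x)))
   <= hausdorff_dim dist_RC (graph `[a, b] f))%E.
  rewrite (graph_comp _ _ f (@complex.Re R)).
  apply: (lip_dim _ _ _ _ _ _ ltr01) => p q _ _; have [h1 h2] := proj_dist _ p q; exact: h1.
split.
  rewrite ge_max H1 /=.
  rewrite (graph_comp _ _ f (@complex.Im R)).
  apply: (lip_dim _ _ _ _ _ _ ltr01) => p q _ _; have [h1 h2] := proj_dist _ p q; exact: h2.
move=> [L HL]; apply/eqP; rewrite eq_le H1 andbT.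
rewrite {1}graph_lift.
have K0 : 0 < 1 + `|L| by rewrite ltr_pwDl.
apply: (lip_dim _ _ _ _ _ _ K0) => p q Hp Hq. exact: (lift_dist _ _ _ _ HL p q Hp Hq).
Qed.
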